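(* Fix a set $\Psi\subseteq\mathcal{K}$, a number $q\ge0$, and for each $k\in\Psi$ an index $k'\in\mathcal{N}$. Define, for variables $p_n\ge0$ ($n\in\mathcal{N}$), $p_{k,k'}\ge0$ and $w_k\in(0,W^k_{MC}]$ ($k\in\Psi$), and multipliers $\lambda\ge0,\mu\ge0$, the Lagrangian $$\mathcal{L}=(1+\mu)\Big[\sum_{n=1}^N B^n_{SC}\log_2\!\Big(1+\tfrac{p_ng_n}{B^n_{SC}N_0}\Big)+\sum_{k\in\Psi}(W^k_{MC}-w_k)\log_2\!\Big(1+\tfrac{p_{k,k'}g_{k,k'}}{(W^k_{MC}-w_k)N_0}\Big)\Big]-\mu R^{SC}_{\min}$$ $$-q\Big(\sum_{n}\tfrac{p_n}{\xi}+\sum_{k\in\Psi}\tfrac{p_{k,k'}}{\xi}+\sum_{k\in\Psi}\big(2^{R^k_{MC}/w_k}-1\big)\tfrac{w_kN_0}{\xi h_k}+P_{\rm c}\Big)+\lambda\Big(P^{SC}_{\max}-\sum_n p_n-\sum_{k\in\Psi}p_{k,k'}-\sum_{k\in\Psi}\big(2^{R^k_{MC}/w_k}-1\big)\tfrac{w_kN_0}{h_k}\Big),$$ where $(W^k_{MC}-w_k)\log_2(\cdot)$ is interpreted as $0$ when $w_k=W^k_{MC}$. Then, given $\lambda$ and $\mu$, the bandwidth and power allocation maximizing $\mathcal{L}$ is $$w_k=\min\!\left(\frac{R^k_{MC}\ln2}{\mathcal{W}\!\left(\frac1e\Big(\frac{\mathcal{C}_k h_k}{(q/\xi+\lambda)N_0}-1\Big)\right)+1},\;W^k_{MC}\right),\quad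 k\in\Psi,$$ $$p_{k,k'}=(W^k_{MC}-w_k)\left[\frac{(1+\mu)\xi}{(q+\lambda\xi)\ln2}-\frac{N_0}{g_{k,k'}}\right]^+,\quad k\in\Psi,$$ $$p_n=B^n_{SC}\left[\frac{(1+\mu)\xi}{(q+\lambda\xi)\ln2}-\frac{N_0}{g_n}\right]^+,\quad n\in\mathcal{N},$$ where $[x]^+=\max\{x,0\}$, $\mathcal{W}$ is the Lambert $W$ function (i.e. $x=\mathcal{W}(x)e^{\mathcal{W}(x)}$), $\widetilde{p}_{k,k'}=\left[\frac{(1+\mu)\xi}{(q+\lambda\xi)\ln2}-\frac{N_0}{g_{k,k'}}\right]^+$, and $\mathcal{C}_k=(1+\mu)\log_2\!\big(1+\widetilde{p}_{k,k'}\frac{g_{k,k'}}{N_0}\big)-\big(\frac{q}{\xi}+\lambda\big)\widetilde{p}_{k,k'}$.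
   Context: Constants: $N_0>0$ noise spectral density; $\xi\in(0,1]$ power amplifier efficiency; $P_{\rm c}>0$ circuit power; $P^{SC}_{\max}>0$; $R^{SC}_{\min}\ge0$. For each $k\in\mathcal{K}=\{1,\dots,K\}$: $W^k_{MC}>0$, $R^k_{MC}>0$, $h_k>0$, and $g_{k,n}>0$ for $n\in\mathcal{N}=\{1,\dots,N\}$. For each $n\in\mathcal{N}$: $B^n_{SC}>0$, $g_n>0$. This Lagrangian arises from the subtractive (Dinkelbach) form of the small-cell energy-efficiency maximization for a fixed set $\Psi$ of served macro users, with $b_{k,k'}=W^k_{MC}-w_k$ and $q_k=(2^{R^k_{MC}/w_k}-1)w_kN_0/h_k$ substituted; $\lambda$ and $\mu$ are the multipliers of the total power constraint and the minimum rate constraint. *)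

(* Defs.v *)
From HB Require Import structures.
From mathcomp Require Import all_boot all_order all_algebra.
From mathcomp Require Import all_classical all_reals.
From mathcomp Require Import sequences exp.
Set Implicit Arguments. Unset Strict Implicit. Unset Printing Implicit Defensive.
Import Order.TTheory GRing.Theory Num.Theory.
Local Open Scope ring_scope.
Local Open Scope classical_set_scope.

Section Defs.
Variable R : realType.

Definition log2 (x : R) : R := ln x / ln 2.

Definition posp (x : R) : R := Num.max x 0.

(* Principal branch W_0 of the Lambert W function: for x >= -1/e, the unique
   y >= -1 with y * e^y = x.  (Arbitrary value 0 outside the domain.) *)
Definition LambertW (x : R) : R :=
  xget 0 [set y : R | -1 <= y /\ y * expR y = x].

Definition rate_term (N0 b p g : R) : R :=
  if b == 0 then 0 else b * log2 (1 + p * g / (b * N0)).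

Variables (K N : nat) (N0 xi Pc Pmax Rmin : R)
  (WMC RMC h : 'I_K -> R) (g : 'I_K -> 'I_N -> R) (B gn : 'I_N -> R)
  (Psi : {set 'I_K}) (kp : 'I_K -> 'I_N) (q lam mu : R).

(* The Lagrangian; p n = p_n, pk k = p_{k,k'} with k' = kp k, w k = w_k *)
Definition lagrangian (p : 'I_N -> R) (pk w : 'I_K -> R) : R :=
  (1 + mu) * (\sum_(n < N) B n * log2 (1 + p n * gn n / (B n * N0))
              + \sum_(k in Psi) rate_term N0 (WMC k - w k) (pk k) (g k (kp k)))
  - mu * Rmin
  - q * (\sum_(n < N) p n / xi + \sum_(k in Psi) pk k / xi
         + \sum_(k in Psi) (2 `^ (RMC k / w k) - 1) * (w k * N0 / (xi * h k))
         + Pc)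
  + lam * (Pmax - \sum_(n < N) p n - \sum_(k in Psi) pk k
           - \sum_(k in Psi) (2 `^ (RMC k / w k) - 1) * (w k * N0 / h k)).

Definition feasible (p : 'I_N -> R) (pk w : 'I_K -> R) : Prop :=
  (forall n, 0 <= p n) /\
  (forall k, k \in Psi -> 0 <= pk k /\ 0 < w k /\ w k <= WMC k).

Definition wlevel : R := (1 + mu) * xi / ((q + lam * xi) * ln 2).

Definition ptilde (k : 'I_K) : R := posp (wlevel - N0 / g k (kp k)).

Definition Ck (k : 'I_K) : R :=
  (1 + mu) * log2 (1 + ptilde k * g k (kp k) / N0) - (q / xi + lam) * ptilde k.

(* w_k = min(R ln2 / (W(...) + 1), W_MC); when W(...)+1 = 0 the first
   argument is +infinity, so the min is W_MC. *)
Definition w_opt (k : 'I_K) : R :=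
  let d := LambertW (expR (-1) * (Ck k * h k / ((q / xi + lam) * N0) - 1)) + 1 in
  if d == 0 then WMC k else Num.min (RMC k * ln 2 / d) (WMC k).

Definition pk_opt (k : 'I_K) : R := (WMC k - w_opt k) * ptilde k.

Definition p_opt (n : 'I_N) : R := B n * posp (wlevel - N0 / gn n).

End Defs.

(* Main.v *)
Require Import Defs.
From HB Require Import structures.
From mathcomp Require Import all_boot all_order all_algebra.
From mathcomp Require Import all_classical all_reals.
From mathcomp Require Import sequences exp realfun topology normedtype.
From mathcomp Require Import ring lra.
Import Order.TTheory GRing.Theory Num.Theory numFieldNormedType.Exports.
Local Open Scope ring_scope.

Section Helpers.
Variable R : realType.

Lemma ln2_gt0 : 0 < ln (2 : R).
Proof. by apply: ln_gt0; rewrite ltr1n. Qed.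

Ltac pos := repeat first [ assumption | apply: mulr_gt0 | apply: divr_gt0 | apply: ln2_gt0 | apply: expR_gt0 ].
Ltac nz := repeat (apply/andP; split); (apply/negbT; apply: gt_eqF); pos.

Lemma ln_tan (y y0 : R) : 0 < y -> 0 < y0 -> ln y <= ln y0 + (y - y0) / y0.
Proof.
move=> hy hy0.
have e : y = y0 * (1 + ((y - y0) / y0)) by field; nz.
have hq : 0 < 1 + (y - y0) / y0.
  have -> : 1 + (y - y0) / y0 = y / y0 by field; nz.
  exact: divr_gt0.
rewrite {1}e lnM ?posrE // lerD2l; apply: le_ln1Dx.
have : -1 < (y - y0) / y0 by rewrite -(ltrD2l 1); lra.
by [].
Qed.

Lemma pow_opt (a c gg N0 b p L : R) : 0 < a -> 0 < c -> 0 < gg -> 0 < N0 ->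
  0 < b -> 0 <= p -> L = a / (c * ln 2) ->
  a * (b * log2 (1 + p * gg / (b * N0))) - c * p <=
  b * (a * log2 (1 + posp (L - N0 / gg) * gg / N0) - c * posp (L - N0 / gg)).
Proof.
move=> ha hc hgg hN0 hb hp hL.
have l2 := @ln2_gt0.
have hy : 0 < 1 + p * gg / (b * N0).
  have : 0 <= p * gg / (b * N0) by apply: divr_ge0; [apply: mulr_ge0; lra| apply: mulr_ge0; lra].
  lra.
rewrite /log2 /posp.
case: (lerP 0 (L - N0 / gg)) => hc0.
-   set y0 := 1 + (L - N0 / gg) * gg / N0.
  have ey0 : y0 = L * gg / N0 by rewrite /y0; field; nz.
  have hy0 : 0 < y0 by rewrite ey0 hL; apply: divr_gt0 => //; apply: mulr_gt0 => //;
    apply: divr_gt0 => //; apply: mulr_gt0.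
  have H := ln_tan _ _ hy hy0.
  set y := 1 + p * gg / (b * N0) in H *.
  have hk : 0 <= a * b / ln 2 by apply: divr_ge0; [apply: mulr_ge0; lra | lra].
  have H2 := ler_wpM2l hk H.
  have e1 : a * (b * (ln y / ln 2)) = a * b / ln 2 * ln y by field; nz.
  have e2 : a * b / ln 2 * ((y - y0) / y0) = c * (p - b * (L - N0 / gg)).
    rewrite /y ey0 hL; field; nz.


  have e3 : b * (a * (ln y0 / ln 2) - c * (L - N0 / gg)) =
            a * b / ln 2 * ln y0 - c * (b * (L - N0 / gg)) by field; nz.
  rewrite e1 e3; move: H2; rewrite mulrDr e2; lra.
-  rewrite !mul0r addr0 ln1 !(mul0r,mulr0,subr0) subr_le0.
  have hx : -1 < p * gg / (b * N0).
    have : 0 <= p * gg / (b * N0) by apply: divr_ge0; [apply: mulr_ge0; lra| apply: mulr_ge0; lra].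
    lra.
  have Hl := le_ln1Dx hx.
  have hag : a * gg <= c * ln 2 * N0.
    have e : a * gg - c * ln 2 * N0 = (L - N0 / gg) * (c * ln 2 * gg).
      by rewrite hL; field; nz.
    have : (L - N0 / gg) * (c * ln 2 * gg) < 0.
      by rewrite pmulr_llt0 // !mulr_gt0.
    rewrite -e; lra.
  apply: (le_trans (y := a * (b * ((p * gg / (b * N0)) / ln 2)))).
    apply: ler_wpM2l; first lra. apply: ler_wpM2l; first lra.
    apply: ler_wpM2r => //; rewrite invr_ge0; lra.
  have -> : a * (b * ((p * gg / (b * N0)) / ln 2)) = p * (a * gg) / (N0 * ln 2).
    by field; nz.
  apply: (le_trans (y := p * (c * ln 2 * N0) / (N0 * ln 2))).
    apply: ler_wpM2r; first by rewrite invr_ge0; apply: mulr_ge0; lra.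
    exact: ler_wpM2l.
  rewrite le_eqVlt; apply/orP; left; apply/eqP; field; rewrite !gt_eqF //.
Qed.

Lemma pow_eq (a c gg N0 b pt : R) : 0 < N0 -> 0 < b ->
  a * (b * log2 (1 + b * pt * gg / (b * N0))) - c * (b * pt) =
  b * (a * log2 (1 + pt * gg / N0) - c * pt).
Proof.
move=> hN0 hb.
have -> : b * pt * gg / (b * N0) = pt * gg / N0 by field; nz.
ring.
Qed.


Lemma phi_tan (Rl w u : R) : 0 < w -> 0 < u ->
  (expR (Rl / u) - 1) * u + (expR (Rl / u) * (1 - Rl / u) - 1) * (w - u)
  <= (expR (Rl / w) - 1) * w.
Proof.
move=> hw hu.
set s := Rl / u; set t := Rl / w.
have h1 : expR s * (1 + (t - s)) <= expR t.
  have -> : expR t = expR s * expR (t - s) by rewrite -expRD; congr expR; ring.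
  apply: ler_wpM2l; first exact: ltW (expR_gt0 _).
  exact: expR_ge1Dx.
have h2 := ler_wpM2r (ltW hw) h1.
have -> : (expR s - 1) * u + (expR s * (1 - s) - 1) * (w - u) =
   expR s * (1 + (t - s)) * w - w by rewrite /s /t; field; nz.
lra.
Qed.

Lemma emono (a b : R) : 0 <= a -> a <= b -> expR a * (a - 1) <= expR b * (b - 1).
Proof.
move=> ha hab.
have Ea := expR_gt0 a; have Eb := expR_gt0 b.
case: (lerP 1 b) => hb.
- have h1 : expR a * (1 + (b - a)) <= expR b.
    have -> : expR b = expR a * expR (b - a) by rewrite -expRD; congr expR; ring.
    apply: ler_wpM2l; first exact: ltW. exact: expR_ge1Dx.
  have H1 : 0 <= (expR b - expR a * (1 + (b - a))) * (b - 1).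
    apply: mulr_ge0; lra.
  have H2 : 0 <= expR a * ((b - a) * b).
    apply: mulr_ge0; first lra. apply: mulr_ge0; lra.
  lra.
- have h1 : expR b * (1 + (a - b)) <= expR a.
    have -> : expR a = expR b * expR (a - b) by rewrite -expRD; congr expR; ring.
    apply: ler_wpM2l; first exact: ltW. exact: expR_ge1Dx.
  have H1 : 0 <= (expR a - expR b * (1 + (a - b))) * (1 - a).
    apply: mulr_ge0; lra.
  have H2 : 0 <= expR b * ((b - a) * a).
    apply: mulr_ge0; first lra. apply: mulr_ge0; lra.
  lra.
Qed.

Lemma lambert_ex (x : R) : - expR (-1) <= x -> exists y, -1 <= y /\ y * expR y = x.
Proof.
move=> hx.
set M := `|x| + 1.
have hM : -1 <= M by rewrite /M; have := normr_ge0 x; lra.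
have cf : continuous (fun y : R => y * expR y).
  move=> z; apply: cvgM; [exact: cvg_id | exact: continuous_expR | ..].
have cw : {within `[-1, M], continuous (fun y : R => y * expR y)}%classic.
  by apply: continuous_subspaceT.
have hv : Num.min ((-1) * expR (-1)) (M * expR M) <= x <= Num.max ((-1) * expR (-1)) (M * expR M).
  apply/andP; split.
    by rewrite ge_min; apply/orP; left; rewrite mulN1r.
  rewrite le_max; apply/orP; right.
  have h1 : 1 <= expR M by have := expR_ge1Dx M; have := normr_ge0 x; rewrite /M; lra.
  have h2 : M <= M * expR M.
    have h0 : 0 <= M by rewrite /M; have := normr_ge0 x; lra.
    by rewrite -{1}(mulr1 M); apply: ler_wpM2l.
  have := ler_norm x; rewrite /M in h2 *; lra.
have [c hc fc] := @IVT R (fun y => y * expR y) (-1) M x hM cw hv.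
exists c; split => //.
by move: hc; rewrite in_itv /= => /andP[].
Qed.

Lemma k_band (Ck D W Rl w w' x : R) : 0 < D -> 0 < w -> w <= W -> 0 < w' ->
  Ck = D * (1 + expR x * (x - 1)) -> 0 <= x -> x <= Rl / w' ->
  (Rl / w' = x \/ w' = W) ->
  (W - w) * Ck - D * ((expR (Rl / w) - 1) * w) <=
  (W - w') * Ck - D * ((expR (Rl / w') - 1) * w').
Proof.
move=> hD hw hwW hw' hC hx hxs hor.
have T := phi_tan Rl w w' hw hw'.
set s := Rl / w' in T hxs hor *.
have T2 := ler_wpM2l (ltW hD) T.
have H3 : (w' - w) * Ck <= (w' - w) * (D * (1 + expR s * (s - 1))).
  case: hor => [es | eW].
    by rewrite es hC.
  apply: ler_wpM2l; first lra.
  rewrite hC; apply: ler_wpM2l; first lra.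
  have := emono _ _ hx hxs; lra.
lra.
Qed.


Lemma wopt_facts (W Rl d : R) : 0 < W -> 0 < Rl -> 0 <= d ->
  let w := if d == 0 then W else Num.min (Rl / d) W in
  [/\ 0 < w, w <= W, d <= Rl / w & (Rl / w = d \/ w = W)].
Proof.
move=> hW hR hd /=.
case: eqP => [->|hd0].
  split => //; last by right.
  by apply: divr_ge0; apply: ltW.
have dp : 0 < d by rewrite lt_neqAle eq_sym; apply/andP; split => //; apply/eqP.
case: (lerP (Rl / d) W) => h.
- split => //.
  + exact: divr_gt0.
  + by rewrite le_eqVlt; apply/orP; left; apply/eqP; field; nz.
  + by left; field; nz.
- split => //.
  + by rewrite ler_pdivlMr //; move: h; rewrite ltr_pdivlMr // mulrC => /ltW.
  + by right.
Qed.

Lemma k_power (a c gg N0 b p L : R) : 0 < a -> 0 < c -> 0 < gg -> 0 < N0 ->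
  0 <= b -> 0 <= p -> L = a / (c * ln 2) ->
  a * rate_term N0 b p gg - c * p <=
  b * (a * log2 (1 + posp (L - N0 / gg) * gg / N0) - c * posp (L - N0 / gg)).
Proof.
move=> ha hc hgg hN0 hb hp hL; rewrite /rate_term.
case: eqP => [->|hb0].
  rewrite mulr0 mul0r sub0r oppr_le0; apply: mulr_ge0 => //; exact: ltW.
apply: pow_opt => //.
by rewrite lt_neqAle eq_sym; apply/andP; split => //; apply/eqP.
Qed.

Lemma k_power_eq (a c gg N0 b pt : R) : 0 < N0 -> 0 <= b ->
  a * rate_term N0 b (b * pt) gg - c * (b * pt) =
  b * (a * log2 (1 + pt * gg / N0) - c * pt).
Proof.
move=> hN0 hb; rewrite /rate_term.
case: eqP => [->|hb0].
  by rewrite !(mul0r, mulr0, subr0).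
apply: pow_eq => //.
by rewrite lt_neqAle eq_sym; apply/andP; split => //; apply/eqP.
Qed.

End Helpers.

Ltac pos := repeat first [ assumption | apply: mulr_gt0 | apply: divr_gt0 | apply: ln2_gt0 | apply: expR_gt0 ].
Ltac nz := repeat (apply/andP; split); (apply/negbT; apply: gt_eqF); pos.


Theorem theorem2 (R : realType) (K N : nat) (N0 xi Pc Pmax Rmin : R)
  (WMC RMC h : 'I_K -> R) (g : 'I_K -> 'I_N -> R) (B gn : 'I_N -> R)
  (Psi : {set 'I_K}) (kp : 'I_K -> 'I_N) (q lam mu : R)
  (hN0 : 0 < N0) (hxi0 : 0 < xi) (hxi1 : xi <= 1) (hPc : 0 < Pc)
  (hPmax : 0 < Pmax) (hRmin : 0 <= Rmin)
  (hWMC : forall k, 0 < WMC k) (hRMC : forall k, 0 < RMC k)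
  (hh : forall k, 0 < h k) (hg : forall k n, 0 < g k n)
  (hB : forall n, 0 < B n) (hgn : forall n, 0 < gn n)
  (hq : 0 <= q) (hlam : 0 <= lam) (hmu : 0 <= mu)
  (hqlam : 0 < q + lam * xi) :
  let L := lagrangian N0 xi Pc Pmax Rmin WMC RMC h g B gn Psi kp q lam mu in
  let p' := p_opt N0 xi B gn q lam mu in
  let pk' := pk_opt N0 xi WMC RMC h g kp q lam mu in
  let w' := w_opt N0 xi WMC RMC h g kp q lam mu in
  feasible WMC Psi p' pk' w' /\
  (forall (p : 'I_N -> R) (pk w : 'I_K -> R),
     feasible WMC Psi p pk w -> L p pk w <= L p' pk' w').

Proof.
move=> L p' pk' w'.
have l2 := @ln2_gt0 R.
have ha : 0 < 1 + mu by lra.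
have hc : 0 < q / xi + lam.
  have -> : q / xi + lam = (q + lam * xi) / xi by field; nz.
  exact: divr_gt0.
have hwl : wlevel xi q lam mu = (1 + mu) / ((q / xi + lam) * ln 2).
  rewrite /wlevel; field; nz.
have hCk0 : forall k, 0 <= Ck N0 xi g kp q lam mu k.
  move=> k.
  have := @k_power R _ _ _ _ 1 0 _ ha hc (hg k (kp k)) hN0 ler01 (lexx 0) hwl.
  rewrite /rate_term oner_eq0 !mul1r !mul0r addr0 /log2 ln1 mul0r !mulr0 subr0.
  by rewrite /Ck /ptilde /log2; apply.
pose Rl k := RMC k * ln 2.
pose D k := (q / xi + lam) * N0 / h k.
have hD : forall k, 0 < D k by move=> k; rewrite /D; apply: divr_gt0 => //; apply: mulr_gt0.
pose y k := LambertW (expR (-1) * (Ck N0 xi g kp q lam mu k * h k / ((q / xi + lam) * N0) - 1)).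
have hy : forall k, -1 <= y k /\ y k * expR (y k) =
   expR (-1) * (Ck N0 xi g kp q lam mu k * h k / ((q / xi + lam) * N0) - 1).
  move=> k.
  have hX : - expR (-1) <= expR (-1) * (Ck N0 xi g kp q lam mu k * h k / ((q / xi + lam) * N0) - 1).
    have : 0 <= Ck N0 xi g kp q lam mu k * h k / ((q / xi + lam) * N0).
      apply: divr_ge0; first by apply: mulr_ge0; [exact: hCk0 | exact: ltW].
      by apply: ltW; apply: mulr_gt0.
    have := expR_gt0 (-1 : R).
    move=> e0 hX0; have := mulr_ge0 (ltW e0) hX0; lra.
  exact: (xgetPex 0 (@lambert_ex R _ hX)).
have hCx : forall k, Ck N0 xi g kp q lam mu k = D k * (1 + expR (y k + 1) * (y k + 1 - 1)).
  move=> k; have [_ e] := hy k.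
  have -> : expR (y k + 1) * (y k + 1 - 1) = expR 1 * (y k * expR (y k)) by rewrite expRD; ring.
  rewrite e mulrA -expRD addrN expR0 mul1r /D; field; nz; exact: hh.
have hwf : forall k, [/\ 0 < w' k, w' k <= WMC k, y k + 1 <= Rl k / w' k &
                       (Rl k / w' k = y k + 1 \/ w' k = WMC k)].
  move=> k; have [hy1 _] := hy k.
  have := @wopt_facts R (WMC k) (Rl k) (y k + 1) (hWMC k) _ _.
  by apply; [rewrite /Rl; pos | lra].
have hpt : forall k, 0 <= ptilde N0 xi g kp q lam mu k.
  by move=> k; rewrite /ptilde /posp le_max lexx orbT.
have feas' : feasible WMC Psi p' pk' w'.
  split.
    move=> n; rewrite /p' /p_opt; apply: mulr_ge0; first exact: ltW.
    by rewrite /posp le_max lexx orbT.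
  move=> k _; have [h1 h2 _ _] := hwf k; split; last by split.
  rewrite /pk' /pk_opt; apply: mulr_ge0; [rewrite subr_ge0; exact: h2 | exact: hpt].
split => // p pk w [hp hpkw].
pose Fn (n : 'I_N) (x : R) := (1 + mu) * (B n * log2 (1 + x * gn n / (B n * N0))) - q * (x / xi) - lam * x.
pose Hk (k : 'I_K) (x v : R) := (1 + mu) * rate_term N0 (WMC k - v) x (g k (kp k))
   - q * (x / xi) - lam * x
   - q * ((2 `^ (RMC k / v) - 1) * (v * N0 / (xi * h k)))
   - lam * ((2 `^ (RMC k / v) - 1) * (v * N0 / h k)).
have decomp : forall (p : 'I_N -> R) (pk w : 'I_K -> R), L p pk w =
  \sum_(n < N) Fn n (p n) + \sum_(k in Psi) Hk k (pk k) (w k)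
  + (- (mu * Rmin) - q * Pc + lam * Pmax).
  move=> p0 pk0 w0; rewrite /L /lagrangian /Fn /Hk !sumrB -!mulr_sumr; ring.
rewrite !decomp lerD2r; apply: lerD; apply: ler_sum.
- move=> n _.
  have -> : Fn n (p n) = (1 + mu) * (B n * log2 (1 + p n * gn n / (B n * N0))) - (q / xi + lam) * p n by rewrite /Fn; ring.
  have -> : Fn n (p' n) = (1 + mu) * (B n * log2 (1 + p' n * gn n / (B n * N0))) - (q / xi + lam) * p' n by rewrite /Fn; ring.
  rewrite /p' /p_opt pow_eq //.
  exact: pow_opt.
- move=> k kP.
  have [hpk [hw hwW]] := hpkw k kP.
  have [h1 h2 h3 h4] := hwf k.
  have eH : forall x v, Hk k x v = ((1 + mu) * rate_term N0 (WMC k - v) x (g k (kp k)) - (q / xi + lam) * x)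
      - D k * ((expR (Rl k / v) - 1) * v).
    move=> x v; rewrite /Hk /D /Rl /powR ifF; last by rewrite pnatr_eq0.
    rewrite mulrAC; field; apply/andP; split; apply/negbT; apply: gt_eqF => //.
  rewrite !eH.
  have hb0 : 0 <= WMC k - w k by rewrite subr_ge0.
  have hp1 := @k_power R _ _ _ _ (WMC k - w k) (pk k) _ ha hc (hg k (kp k)) hN0 hb0 hpk hwl.
  rewrite -/(ptilde N0 xi g kp q lam mu k) -/(Ck N0 xi g kp q lam mu k) in hp1.
  have hp2 : (1 + mu) * rate_term N0 (WMC k - w' k) (pk' k) (g k (kp k)) - (q / xi + lam) * pk' k
      = (WMC k - w' k) * Ck N0 xi g kp q lam mu k.
    rewrite /pk' /pk_opt -/(w' k) k_power_eq //; last lra.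
  rewrite hp2.
  have hx0 : 0 <= y k + 1 by have [hy1 _] := hy k; lra.
  have hb := @k_band R _ _ (WMC k) (Rl k) _ _ _ (hD k) hw hwW h1 (hCx k) hx0 h3 h4.
  lra.
Qed.
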